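(* Let $\alpha\geq 1$ be a real number. If a connected $(n,m)$-graph $G$ has maximum value of $\chi_\alpha$ among all connected $(n,m)$-graphs, then the maximum vertex degree in $G$ is $n-1$.
   Context: All graphs are finite, simple, undirected and connected; an $(n,m)$-graph has $n$ vertices and $m$ edges. The general sum-connectivity index is $\chi_\alpha(G)=\sum_{uv\in E(G)}(d_u+d_v)^\alpha$, where $d_u$ is the degree of vertex $u$. *)

(* Defs.v *)
From HB Require Import structures.
From mathcomp Require Import all_boot all_order all_algebra.
From mathcomp Require Import reals exp.
Set Implicit Arguments. Unset Strict Implicit. Unset Printing Implicit Defensive.
Import Order.TTheory GRing.Theory Num.Theory.

Definition simple_graph (n : nat) (e : rel 'I_n) : Prop :=
  symmetric e /\ irreflexive e.

Definition connected_graph (n : nat) (e : rel 'I_n) : Prop :=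
  forall x y : 'I_n, connect e x y.

(* edge set: unordered pairs {u,v} represented with u < v *)
Definition edges (n : nat) (e : rel 'I_n) : {set 'I_n * 'I_n} :=
  [set p : 'I_n * 'I_n | (p.1 < p.2)%N && e p.1 p.2].

Definition nedges (n : nat) (e : rel 'I_n) : nat := #|edges e|.

Definition deg (n : nat) (e : rel 'I_n) (u : 'I_n) : nat := #|[set v | e u v]|.

Definition max_deg (n : nat) (e : rel 'I_n) : nat := \max_(u : 'I_n) deg e u.

Local Open Scope ring_scope.

Definition chi (R : realType) (alpha : R) (n : nat) (e : rel 'I_n) : R :=
  \sum_(p in edges e) powR ((deg e p.1 + deg e p.2)%:R) alpha.

(* Main.v *)
Require Import Defs.
From HB Require Import structures.
From mathcomp Require Import all_boot all_order all_algebra.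
From mathcomp Require Import reals exp convex hoelder.
From mathcomp Require Import ring lra zify interval_inference.
Import IntItv.
From mathcomp Require Import classical_sets set_interval.
Import Order.TTheory GRing.Theory Num.Theory.
Local Open Scope ring_scope.
Set Implicit Arguments. Unset Strict Implicit.

Lemma aux_eqa (R : realFieldType) (a lo hi : R) : hi - lo != 0 -> (a - lo) / (hi - lo) * hi + (1 - (a - lo) / (hi - lo)) * lo = a.
Proof. by move=> h; field. Qed.
Lemma aux_eqb (R : realFieldType) (a b lo hi : R) : a + b = lo + hi -> hi - lo != 0 -> (a - lo) / (hi - lo) * lo + (1 - (a - lo) / (hi - lo)) * hi = b.
Proof. move=> e h; have -> : b = lo + hi - a by rewrite -e; ring. by field. Qed.

Lemma powR_conv2 (R : realType) (p lo b a hi : R) : 1 <= p ->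
  0 <= lo -> lo <= b -> b <= a -> a <= hi -> a + b = lo + hi ->
  powR a p + powR b p <= powR lo p + powR hi p.
Proof.
move=> p1 lo0 lob ba ahi sum.
have [hl|hl] := eqVneq hi lo.
  have ea : a = lo by apply/eqP; rewrite eq_le -{1}hl ahi (le_trans lob ba).
  have eb : b = lo by apply/eqP; rewrite eq_le -{1}hl (le_trans ba ahi) lob.
  by rewrite ea eb hl.
have hlt : 0 < hi - lo by rewrite subr_gt0 lt_neqAle eq_sym hl (le_trans lob (le_trans ba ahi)).
pose t := (a - lo) / (hi - lo).
have t0 : 0 <= t by rewrite divr_ge0 //; lra.
have t1 : t <= 1 by rewrite ler_pdivrMr // mul1r; lra.
pose T := Itv01 t0 t1.
have cv := convex_powR p1 T.
have D : forall z : R, 0 <= z -> z \in (`[0, +oo[%classic : set R).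
  by move=> z z0; rewrite inE /= in_itv /= z0.
have hi0 : 0 <= hi by lra.
have Ha := cv hi lo (D _ hi0) (D _ lo0).
have Hb := cv lo hi (D _ lo0) (D _ hi0).
rewrite convRE [X in X `^ _ <= _]convRE /= in Ha.
rewrite convRE [X in X `^ _ <= _]convRE /= in Hb.
have ea : t * hi + (1 - t) * lo = a by rewrite /t aux_eqa // gt_eqF.
have eb : t * lo + (1 - t) * hi = b by rewrite /t (@aux_eqb _ _ _ _ _ sum) // gt_eqF.
have om : unstable.onem t = 1 - t by [].
rewrite om ea in Ha; rewrite om eb in Hb.
lra.
Qed.

Section Generic.
Variable R : realType.
Variable n : nat.

Lemma edge_sum2 (c : rel 'I_n) (g : 'I_n -> 'I_n -> R) :
  symmetric c -> irreflexive c -> (forall a b, g a b = g b a) ->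
  (\sum_(p in edges c) g p.1 p.2) *+ 2 =
  \sum_(a : 'I_n) \sum_(b : 'I_n) (if c a b then g a b else 0).
Proof.
move=> sym irr gs.
have E1 : \sum_(p in edges c) g p.1 p.2 =
          \sum_(a : 'I_n) \sum_(b : 'I_n) (if (a < b)%N && c a b then g a b else 0).
  rewrite pair_big /= big_mkcond /=; apply: eq_bigr => -[a b] _ /=.
  by rewrite inE.
have E2 : \sum_(a : 'I_n) \sum_(b : 'I_n) (if c a b then g a b else 0) =
   \sum_(a : 'I_n) \sum_(b : 'I_n) (if (a < b)%N && c a b then g a b else 0) +
   \sum_(a : 'I_n) \sum_(b : 'I_n) (if (b < a)%N && c a b then g a b else 0).
  rewrite -big_split /=; apply: eq_bigr => a _; rewrite -big_split /=.
  apply: eq_bigr => b _.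
  case cab: (c a b); last by rewrite !andbF addr0.
  rewrite !andbT.
  case: ltngtP => h; rewrite ?addr0 ?add0r //.
  by move/val_inj: h => h; rewrite h irr in cab.
have E3 : \sum_(a : 'I_n) \sum_(b : 'I_n) (if (b < a)%N && c a b then g a b else 0) =
          \sum_(a : 'I_n) \sum_(b : 'I_n) (if (a < b)%N && c a b then g a b else 0).
  rewrite exchange_big /=; apply: eq_bigr => a _; apply: eq_bigr => b _.
  by rewrite sym gs.
by rewrite E2 E3 E1 mulr2n.
Qed.

Lemma sum_split2 (F : 'I_n -> R) (u x : 'I_n) : x != u ->
  \sum_(a : 'I_n) F a = F u + F x + \sum_(a | (a != u) && (a != x)) F a.
Proof.
move=> xu; rewrite (bigD1 u) //= (bigD1 x) //= addrA.
by [].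
Qed.

Lemma assembly (h h' : 'I_n -> 'I_n -> R) (u x y : 'I_n) : x != u ->
  (forall a b, h a b = h b a) -> (forall a b, h' a b = h' b a) ->
  (forall a b, a != u -> a != x -> b != u -> b != x -> h' a b = h a b) ->
  (forall b, h u b + h x b <= h' u b + h' x b) ->
  h u y + h x y < h' u y + h' x y ->
  \sum_(a : 'I_n) \sum_(b : 'I_n) h a b < \sum_(a : 'I_n) \sum_(b : 'I_n) h' a b.
Proof.
move=> xu hs hs' heq hle hlt.
have split (k : 'I_n -> 'I_n -> R) : (forall a b, k a b = k b a) ->
  \sum_(a : 'I_n) \sum_(b : 'I_n) k a b = \sum_b (k u b + k x b) +
     \sum_(a | (a != u) && (a != x)) ((k u a + k x a) +
        \sum_(b | (b != u) && (b != x)) k a b).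
  move=> ks; rewrite (@sum_split2 _ u x xu) big_split /=; congr (_ + _).
  apply: eq_bigr => a _; rewrite (@sum_split2 _ u x xu) (ks a u) (ks a x) //.
rewrite (split _ hs) (split _ hs').
apply: ltr_leD.
  rewrite (bigD1 y) //= [X in _ < X](bigD1 y) //=.
  by apply: ltr_leD => //; apply: ler_sum => b _.
apply: ler_sum => a /andP[au ax]; apply: lerD => //.
by rewrite le_eqVlt; apply/orP; left; apply/eqP; apply: eq_bigr => b /andP[bu bx]; rewrite heq.
Qed.

End Generic.

Section Kelmans.
Variable n : nat.
Variable e : rel 'I_n.
Variables u x y : 'I_n.
Hypothesis sym : symmetric e.
Hypothesis irr : irreflexive e.
Hypothesis eux : e u x.
Hypothesis exy : e x y.
Hypothesis yu : y != u.
Hypothesis nuy : ~~ e u y.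

Definition M z := e x z && ~~ e u z && (z != u).
Definition e' : rel 'I_n := fun a b =>
  (e a b && ~~ ((a == x) && M b || (b == x) && M a)) ||
  ((a == u) && M b || (b == u) && M a).
Definition kk := #|[set z | M z]|.

Lemma xu : x != u.
Proof. by apply: contraTneq eux => ->; rewrite irr. Qed.
Lemma Mu : M u = false.
Proof. by rewrite /M eqxx andbF. Qed.
Lemma Mx : M x = false.
Proof. by rewrite /M irr. Qed.
Lemma My : M y.
Proof. by rewrite /M exy nuy yu. Qed.

Lemma e'_sym : symmetric e'.
Proof.
move=> a b; rewrite /e' sym; congr (_ && ~~ _ || _); apply: orbC.
Qed.

Lemma e'_irr : irreflexive e'.
Proof.
move=> a; rewrite /e' irr /=; case: eqP => [->|] /=; first by rewrite Mu.
by [].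
Qed.

Lemma e'_u b : e' u b = e u b || M b.
Proof.
rewrite /e' eq_sym (negbTE xu) Mu eqxx /= !andbF orbF.
case: (M b) (e u b) => -[] //=.
Qed.

Lemma e'_x b : e' x b = e x b && ~~ M b.
Proof.
rewrite /e' eqxx (negbTE xu) Mx /= !andbF !orbF.
by [].
Qed.

Lemma e'_o a b : a != u -> a != x -> e' a b =
  (e a b && ~~ ((b == x) && M a)) || ((b == u) && M a).
Proof. by move=> au ax; rewrite /e' (negbTE au) (negbTE ax). Qed.

Lemma e'_oo a b : a != u -> a != x -> b != u -> b != x -> e' a b = e a b.
Proof.
move=> au ax bu bx; rewrite e'_o // (negbTE bu) (negbTE bx) /= andbT orbF.
by [].
Qed.

Lemma deg'_u : deg e' u = (deg e u + kk)%N.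
Proof.
rewrite /deg /kk.
have -> : [set v | e' u v] = [set v | e u v] :|: [set z | M z].
  by apply/setP => v; rewrite !inE e'_u.
rewrite cardsU.
have -> : [set v | e u v] :&: [set z | M z] = finset.set0.
  apply/setP => v; rewrite !inE /M.
  by case: (e u v); rewrite ?andbF.
by rewrite cards0 subn0.
Qed.

Lemma deg'_x : (kk + deg e' x)%N = deg e x.
Proof.
rewrite /deg /kk -(cardsID [set z | M z] [set v | e x v]).
congr addn; apply: eq_card => v; rewrite !inE ?e'_x.
  by rewrite /M; case: (e x v).
by rewrite andbC.
Qed.

Lemma deg'_o z : z != u -> z != x -> deg e' z = deg e z.
Proof.
move=> zu zx; rewrite /deg.
case Mz: (M z).
  have -> : [set v | e' z v] = u |: ([set v | e z v] :\ x).
    apply/setP => v; rewrite !inE e'_o // Mz !andbT.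
    by rewrite orbC andbC.
  rewrite cardsU1 [in RHS](cardsD1 x) !inE /=.
  move: Mz; rewrite /M => /andP[/andP[exz nuz] _].
  by rewrite (sym z u) (negbTE nuz) (sym z x) exz andbF.
apply: eq_card => v; rewrite !inE e'_o // Mz !andbF orbF andbT.
by [].
Qed.

Lemma kk_pos : (0 < kk)%N.
Proof. by apply/card_gt0P; exists y; rewrite inE My. Qed.

Lemma e'_conn : connected_graph e -> connected_graph e'.
Proof.
move=> conn a b; apply: (connect_sub _ (conn a b)) => p q epq.
case e'pq: (e' p q); first exact: connect1.
have exu' : e' x u by rewrite e'_x (sym x u) eux Mu.
have : ((p == x) && M q) || ((q == x) && M p).
  apply/negPn/negP => h; move: e'pq; by rewrite /e' epq (negbTE h).
case/orP => [/andP[/eqP-> Mq] | /andP[/eqP-> Mp]].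
  apply: (connect_trans (connect1 exu')); apply: connect1.
  by rewrite e'_u Mq orbT.
have h1 : e' p u by rewrite e'_sym e'_u Mp orbT.
have h2 : e' u x by rewrite e'_u eux.
exact: connect_trans (connect1 h1) (connect1 h2).
Qed.

End Kelmans.

Section Analytic.
Variable R : realType.
Variable alpha : R.
Hypothesis a1 : 1 <= alpha.

Definition F (t : nat) : R := powR (t%:R) alpha.

Lemma F_le s t : (s <= t)%N -> F s <= F t.
Proof.
move=> st; apply: ge0_ler_powR; rewrite ?nnegrE ?ler_nat //.
by apply: le_trans a1.
Qed.

Lemma F_lt s t : (s < t)%N -> F s < F t.
Proof.
move=> st; apply: gt0_ltr_powR; rewrite ?nnegrE ?ltr_nat //.
by apply: lt_le_trans a1.
Qed.

Lemma F_conv lo b a hi : (lo <= b)%N -> (b <= a)%N -> (a <= hi)%N ->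
  (a + b = lo + hi)%N -> F a + F b <= F lo + F hi.
Proof.
move=> h1 h2 h3 h4; apply: powR_conv2; rewrite ?ler_nat //.
by rewrite -!natrD h4.
Qed.

Variable n : nat.

Definition Hc (c : rel 'I_n) (a b : 'I_n) : R :=
  if c a b then F (deg c a + deg c b) else 0.

Lemma Hc_sym c : symmetric c -> forall a b, Hc c a b = Hc c b a.
Proof. by move=> s a b; rewrite /Hc s addnC. Qed.

Lemma chi2 c : symmetric c -> irreflexive c ->
  chi alpha c *+ 2 = \sum_(a : 'I_n) \sum_(b : 'I_n) Hc c a b.
Proof.
move=> s i; rewrite /chi (@edge_sum2 R n c (fun a b => F (deg c a + deg c b))) //.
by move=> a b; rewrite addnC.
Qed.

Lemma nedges2 c : symmetric c -> irreflexive c ->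
  (nedges c)%:R *+ 2 = \sum_(a : 'I_n) ((deg c a)%:R : R).
Proof.
move=> s i; have := @edge_sum2 R n c (fun _ _ => 1) s i (fun _ _ => erefl).
rewrite sumr_const /nedges => ->; apply: eq_bigr => a _.
rewrite -big_mkcond /= sumr_const /deg; congr (_ *+ _).
by apply: eq_card => b; rewrite !inE.
Qed.

Section K.
Variable e : rel 'I_n.
Variables u x y : 'I_n.
Hypothesis sym : symmetric e.
Hypothesis irr : irreflexive e.
Hypothesis eux : e u x.
Hypothesis exy : e x y.
Hypothesis yu : y != u.
Hypothesis nuy : ~~ e u y.
Hypothesis umax : forall v, (deg e v <= deg e u)%N.

Local Notation e2 := (e' e u x).

Lemma nedges_eq : nedges e2 = nedges e.
Proof.
have xu := xu irr eux.
have h : ((nedges e2)%:R *+ 2 : R) = (nedges e)%:R *+ 2.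
  rewrite !nedges2 //; last 2 first.
  - exact: e'_sym.
  - exact: e'_irr.
  rewrite !(@sum_split2 _ _ _ u x xu).
  congr (_ + _).
    rewrite deg'_u // -(deg'_x irr eux) !natrD; ring.
  apply: eq_bigr => a /andP[au ax]; by rewrite deg'_o.
have : ((nedges e2)%:R : R) = (nedges e)%:R by move: h; rewrite !mulr2n; lra.
by move/eqP; rewrite eqr_nat => /eqP.
Qed.

Lemma key b : Hc e u b + Hc e x b <= Hc e2 u b + Hc e2 x b.
Proof.
have xu := xu irr eux.
have dx := deg'_x irr eux.
have du := deg'_u irr eux.
have dxu : (deg e x <= deg e u)%N := umax x.
case: (eqVneq b u) => [->|bu].
  rewrite /Hc irr (e'_irr u x irr) e'_x // (Mu e u x) (sym x u) eux /= !add0r.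
  rewrite le_eqVlt; apply/orP; left; apply/eqP. congr F; lia.
case: (eqVneq b x) => [->|bx].
  rewrite /Hc irr (e'_irr u x irr) e'_u // (Mx u x irr) eux /= !addr0.
  rewrite le_eqVlt; apply/orP; left; apply/eqP. congr F; lia.
have Mb : M e u x b = e x b && ~~ e u b by rewrite /M bu andbT.
rewrite /Hc e'_u // e'_x // Mb (deg'_o sym bu bx).
case eub: (e u b); case exb: (e x b) => /=; rewrite ?addr0 ?add0r.
- rewrite [X in _ <= X]addrC; apply: F_conv; lia.
- apply: F_le; lia.
- apply/ltW/F_lt; move: (kk_pos exy yu nuy); lia.
- by [].
Qed.

Lemma key_y : Hc e u y + Hc e x y < Hc e2 u y + Hc e2 x y.
Proof.
have xu := xu irr eux.
have dx := deg'_x irr eux.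
have du := deg'_u irr eux.
have dxu : (deg e x <= deg e u)%N := umax x.
have yx : y != x by apply: contraTneq exy => ->; rewrite irr.
have Mb : M e u x y by rewrite /M yu andbT exy nuy.
rewrite /Hc e'_u // e'_x // Mb (negbTE nuy) exy (deg'_o sym yu yx) /=.
rewrite add0r addr0; apply: F_lt; move: (kk_pos exy yu nuy); lia.
Qed.

Lemma chi_lt : chi alpha e < chi alpha e2.
Proof.
have xu := xu irr eux.
have s2 := e'_sym u x sym.
have i2 := e'_irr u x irr.
have : chi alpha e *+ 2 < chi alpha e2 *+ 2.
  rewrite !chi2 //; apply: (@assembly _ _ _ _ u x y) => //.
  - exact: Hc_sym.
  - exact: Hc_sym.
  - move=> a b au ax bu bx; rewrite /Hc e'_oo // !deg'_o //.
  - exact: key.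
  - exact: key_y.
by rewrite !mulr2n; lra.
Qed.

End K.
End Analytic.



Theorem corollary3 (R : realType) (alpha : R) (n : nat) (e : rel 'I_n) :
  1 <= alpha ->
  simple_graph e -> connected_graph e ->
  (forall e' : rel 'I_n, simple_graph e' -> connected_graph e' ->
     nedges e' = nedges e -> chi alpha e' <= chi alpha e) ->
  max_deg e = (n - 1)%N.
Proof.
move=> a1 [sym irr] conn hmax.
case: n e sym irr conn hmax => [|n] e sym irr conn hmax.
  apply/eqP; rewrite /max_deg -leqn0; apply/bigmax_leqP => -[m lt].
  by have := lt; rewrite ltn0.
pose u := [arg max_(i > ord0) deg e i].
have umax : forall v, (deg e v <= deg e u)%N.
  by rewrite /u; case: arg_maxnP => // i _ h v; exact: h.
have -> : max_deg e = deg e u.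
  apply/eqP; rewrite eqn_leq leq_bigmax andbT; apply/bigmax_leqP => v _; exact: umax.
case: (pickP [pred w | (w != u) && ~~ e u w]) => [w /andP[wu nuw] | none]; last first.
  rewrite subn1 /= /deg.
  have -> : [set v | e u v] = [set~ u].
    apply/setP => v; rewrite !inE; have := none v; rewrite /=.
    case: (eqVneq v u) => [->|vu] /=; first by rewrite irr.
    by move/negbFE.
  by rewrite cardsC1 card_ord.
exfalso.
case: (pickP [pred p : 'I_n.+1 * 'I_n.+1 | [&& e u p.1, e p.1 p.2, p.2 != u & ~~ e u p.2]]) => [[x y] /= /and4P[eux exy yu nuy] | none].
  have := hmax (e' e u x) (conj (e'_sym u x sym) (e'_irr u x irr)) (e'_conn sym irr eux conn) (nedges_eq R sym irr eux).
  by rewrite leNgt (chi_lt a1 sym irr eux exy yu nuy umax).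
pose a := [pred z | (z == u) || e u z].
have imp : forall p q, e p q -> p \in a -> q \in a.
  move=> p q epq; rewrite !inE /= => /orP[/eqP eq|eup].
    by rewrite -eq epq orbT.
  apply/negPn/negP; rewrite negb_or => /andP[qu nuq].
  by move: (none (p, q)); rewrite /= eup epq qu nuq.
have cl : closed e a.
  by move=> p q epq; apply/idP/idP; apply: imp; rewrite // sym.
have := closed_connect cl (conn u w).
by rewrite !inE /= eqxx (negbTE wu) (negbTE nuw).
Qed.
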